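(* For any multigraph $G$, $|P(\mathcal{H}_G,-1)|=T_G(0,2)$, and this number equals the number of totally cyclic orientations of $G$.
   Context: A hypergraph $\mathcal{H}=(\mathcal{V},\mathcal{E})$ consists of a finite vertex set $\mathcal{V}$ and a set $\mathcal{E}$ of subsets of $\mathcal{V}$, each of size at least $1$, called edges. For a positive integer $\lambda$, a weak proper $\lambda$-colouring of $\mathcal{H}$ is a map $\phi:\mathcal{V}\to\{1,\dots,\lambda\}$ such that $|\{\phi(v):v\in e\}|>1$ for every $e\in\mathcal{E}$. $P(\mathcal{H},\lambda)$ denotes the number of weak proper $\lambda$-colourings of $\mathcal{H}$; it is a polynomial in $\lambda$, evaluated at $\lambda=-1$ as a polynomial. For a multigraph $G=(V,E)$ (loops and parallel edges allowed), $\mathcal{H}_G$ is the hypergraph with vertex set $V\cup\{w_e:e\in E\}$ (distinct new vertices $w_e$) and edge set $\{\{u_e,v_e,w_e\}: e\in E\}$, where $u_e,v_e$ are the ends of $e$. The Tutte polynomial is $T_G(x,y)=\sum_{A\subseteq E}(x-1)^{r(E)-r(A)}(y-1)^{|A|-r(A)}$ with $r(A)=|V|-c(A)$, $c(A)$ the number of components of $(V,A)$. A totally cyclic orientation of $G$ is an orientation in which every arc lies in some directed cycle. *)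

(* Defs.v *)
From HB Require Import structures.
From mathcomp Require Import all_boot all_order all_algebra.
Set Implicit Arguments. Unset Strict Implicit. Unset Printing Implicit Defensive.
Import Order.TTheory GRing.Theory Num.Theory.

Definition weak_proper (W I : finType) (hedge : I -> {set W}) (lam : nat)
  (phi : {ffun W -> 'I_lam}) : bool :=
  [forall i, 1 < #|phi @: hedge i|].

Definition num_weak_col (W I : finType) (hedge : I -> {set W}) (lam : nat) : nat :=
  #|[pred phi : {ffun W -> 'I_lam} | weak_proper hedge phi]|.

(* A multigraph G = (V, E) is given by finite types V, E and a map
   ends : E -> V * V giving the two ends (u_e, v_e) of each edge
   (loops: u_e = v_e; parallel edges: distinct e with the same ends). *)

(* The hypergraph H_G: vertex set V + E (w_e = inr e), edges {u_e, v_e, w_e}. *)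
Definition HG_edge (V E : finType) (ends : E -> V * V) (e : E) : {set V + E} :=
  [set inl (ends e).1; inl (ends e).2; inr e].

Definition adjA (V E : finType) (ends : E -> V * V) (A : {set E}) : rel V :=
  fun u v => [exists e in A, (ends e == (u, v)) || (ends e == (v, u))].

Definition ncomp (V E : finType) (ends : E -> V * V) (A : {set E}) : nat :=
  #|[set [set y | connect (adjA ends A) x y] | x : V]|.

Definition rk (V E : finType) (ends : E -> V * V) (A : {set E}) : nat :=
  #|V| - ncomp ends A.

Definition tutte (V E : finType) (ends : E -> V * V) (R : pzRingType) (x y : R) : R :=
  \sum_(A : {set E})
     (x - 1) ^+ (rk ends setT - rk ends A) * (y - 1) ^+ (#|A| - rk ends A).

(* An orientation assigns to each edge a direction: o e = true means
   u_e -> v_e, o e = false means v_e -> u_e (loops get two orientations,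
   as usual). *)
Definition otail (V E : finType) (ends : E -> V * V) (o : {ffun E -> bool}) (e : E) : V :=
  if o e then (ends e).1 else (ends e).2.
Definition ohead (V E : finType) (ends : E -> V * V) (o : {ffun E -> bool}) (e : E) : V :=
  if o e then (ends e).2 else (ends e).1.

Definition dir_cycle (V E : finType) (ends : E -> V * V) (o : {ffun E -> bool})
  (s : seq E) : bool :=
  [&& s != [::], uniq (map (otail ends o) s) &
      cycle (fun a b => ohead ends o a == otail ends o b) s].

(* Since the tail vertices of a directed
   cycle are distinct, so are its arcs, hence its length is at most #|E|;
   this lets us quantify over bounded tuples and obtain a boolean. *)
Definition arc_in_dir_cycle (V E : finType) (ends : E -> V * V)
  (o : {ffun E -> bool}) (e : E) : bool :=
  [exists n : 'I_#|E|.+1, [exists t : n.-tuple E,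
     (e \in val t) && dir_cycle ends o (val t)]].

Definition totally_cyclic (V E : finType) (ends : E -> V * V) (o : {ffun E -> bool}) : bool :=
  [forall e, arc_in_dir_cycle ends o e].

Definition num_tco (V E : finType) (ends : E -> V * V) : nat :=
  #|[pred o : {ffun E -> bool} | totally_cyclic ends o]|.

(* Main.v *)
Require Import Defs.
From HB Require Import structures.
From mathcomp Require Import all_boot all_order all_algebra.
From mathcomp Require Import zify.
Import Order.TTheory GRing.Theory Num.Theory.
Set Implicit Arguments. Unset Strict Implicit. Unset Printing Implicit Defensive.

Section Comp.
Variables (V E : finType) (ends : E -> V * V).

Definition cond (L : finType) (F : {set E}) (f : {ffun V -> L}) :=
  [forall e in F, f (ends e).1 == f (ends e).2].

Lemma adjA_sym (F : {set E}) : symmetric (adjA ends F).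
Proof.
move=> x y; rewrite /adjA; apply/existsP/existsP => -[e He]; exists e;
  by rewrite orbC.
Qed.

Lemma adjA_ends (F : {set E}) (e : E) : e \in F -> adjA ends F (ends e).1 (ends e).2.
Proof. by move=> eF; apply/existsP; exists e; rewrite eF -surjective_pairing eqxx. Qed.

Lemma cond_connect (L : finType) (F : {set E}) (f : {ffun V -> L}) x y :
  cond F f -> connect (adjA ends F) x y -> f x = f y.
Proof.
move=> /forall_inP Hc /connectP [p Hp ->]; elim: p x Hp => //= z p IH x /andP [Hxz Hp].
rewrite -(IH _ Hp); case/existsP: Hxz => e /andP [eF He].
by have := eqP (Hc e eF); case/orP: He => /eqP -> /= ->.
Qed.

Definition cl (F : {set E}) x := [set y | connect (adjA ends F) x y].
Definition Cls (F : {set E}) := [set cl F x | x : V].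

Lemma cl_eq (F : {set E}) x y : connect (adjA ends F) x y -> cl F x = cl F y.
Proof.
move=> Hxy; apply/setP => z; rewrite !inE; apply/idP/idP => H.
  by apply: connect_trans H; rewrite (sym_connect_sym (adjA_sym F)).
by apply: connect_trans H.
Qed.

Lemma count_cond (L : finType) (F : {set E}) :
  #|[pred f : {ffun V -> L} | cond F f]| = #|L| ^ ncomp ends F.
Proof.
pose K := {X : {set V} | X \in Cls F}.
have clK x : cl F x \in Cls F by apply: imset_f.
pose k x : K := exist _ (cl F x) (clK x).
pose h (g : {ffun K -> L}) : {ffun V -> L} := [ffun x => g (k x)].
have hinj : injective h.
  move=> g1 g2 Hg; apply/ffunP => -[X HX].
  case/imsetP: (HX) => x _ HXx.
  have -> : exist _ X HX = k x by apply: val_inj.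
  by have := congr1 (fun f : {ffun V -> L} => f x) Hg; rewrite /h !ffunE.
have Heq : [pred f : {ffun V -> L} | cond F f] =i h @: setT.
  move=> f; rewrite inE; apply/idP/imsetP.
    move=> Hf.
    have Hne (X : K) : exists y, y \in val X.
      by case: X => X /= /imsetP [x _ ->]; exists x; rewrite inE connect0.
    exists [ffun X : K => f (xchoose (Hne X))] => //.
    apply/ffunP => x; rewrite /h !ffunE /=.
    apply: (cond_connect Hf).
    by have := xchooseP (Hne (k x)); rewrite inE.
  case=> g _ ->; apply/forall_inP => e eF; rewrite /h !ffunE.
  apply/eqP; congr (g _); apply: val_inj => /=; apply: cl_eq.
  by apply: connect1; apply: adjA_ends.
rewrite (eq_card Heq) card_imset // cardsT card_ffun card_sig /ncomp.
by congr (_ ^ _); apply: eq_card => X; rewrite !inE.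
Qed.

Lemma card_sumb (T : finType) (P : pred T) : #|[pred x | P x]| = \sum_x (P x : nat).
Proof. by rewrite -sum1_card big_mkcond /=; apply: eq_bigr => x _; rewrite inE; case: (P x). Qed.

Lemma ncomp_le_V (F : {set E}) : ncomp ends F <= #|V|.
Proof.
have := max_card [pred f : {ffun V -> bool} | cond F f].
by rewrite count_cond card_ffun card_bool leq_exp2l.
Qed.

Lemma ncomp_mono (F1 F2 : {set E}) : F1 \subset F2 -> ncomp ends F2 <= ncomp ends F1.
Proof.
move=> /subsetP H12.
have : [pred f : {ffun V -> bool} | cond F2 f] \subset [pred f | cond F1 f].
  apply/subsetP => f; rewrite !inE => /forall_inP Hf; apply/forall_inP => e eF.
  by apply: Hf; apply: H12.
by move/subset_leq_card; rewrite !count_cond card_bool leq_exp2l.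
Qed.

Lemma cond_U1 (L : finType) (F : {set E}) e (f : {ffun V -> L}) :
  cond (e |: F) f = cond F f && (f (ends e).1 == f (ends e).2).
Proof.
apply/forall_inP/andP => [H | [/forall_inP H1 H2] a].
  split; last by apply: H; rewrite setU11.
  by apply/forall_inP => a aF; apply: H; rewrite setU1r.
by rewrite in_setU1 => /orP [/eqP -> // | /H1].
Qed.

Lemma ncomp_conn (F : {set E}) e :
  connect (adjA ends F) (ends e).1 (ends e).2 -> ncomp ends (e |: F) = ncomp ends F.
Proof.
move=> Hc; apply/eqP; rewrite -(@eqn_exp2l 2) // -(card_bool) -!count_cond.
apply/eqP/eq_card => f; rewrite !inE cond_U1.
by case Hf: (cond F f) => //=; rewrite (cond_connect Hf Hc) eqxx.
Qed.

Lemma ncomp_bridge (F : {set E}) e :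
  ~~ connect (adjA ends F) (ends e).1 (ends e).2 ->
  ncomp ends F = (ncomp ends (e |: F)).+1.
Proof.
set u := (ends e).1; set v := (ends e).2 => Hnc.
pose fl (f : {ffun V -> bool}) : {ffun V -> bool} :=
  [ffun x => if x \in cl F v then ~~ f x else f x].
have flK : involutive fl by move=> f; apply/ffunP => x; rewrite !ffunE; case: (x \in cl F v); rewrite ?negbK.
have flc f : cond F (fl f) = cond F f.
  apply: eq_forallb_in => a aF; rewrite !ffunE.
  have -> : ((ends a).2 \in cl F v) = ((ends a).1 \in cl F v).
    rewrite !inE; apply/idP/idP => H; apply: connect_trans H _.
      by rewrite (sym_connect_sym (adjA_sym F)); apply: connect1; apply: adjA_ends.
    by apply: connect1; apply: adjA_ends.
  by case: ifP => _ //; case: (f _); case: (f _).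
have Hu : (u \in cl F v) = false.
  apply/negbTE; rewrite inE (sym_connect_sym (adjA_sym F)); exact: Hnc.
have Hv : v \in cl F v by rewrite inE connect0.
have Hfl f : (fl f u == fl f v) = (f u != f v).
  by rewrite !ffunE Hu Hv; case: (f u); case: (f v).
apply/eqP; rewrite -(@eqn_exp2l 2) // expnS mul2n -addnn -(card_bool) -!count_cond.
rewrite (card_sumb (fun f => cond F f)).
rewrite (bigID (fun f : {ffun V -> bool} => f u == f v)) /=.
have H1 : \sum_(f : {ffun V -> bool} | f u == f v) (cond F f : nat) = #|[pred f : {ffun V -> bool} | cond (e |: F) f]|.
  rewrite card_sumb big_mkcond /=; apply: eq_bigr => f _; rewrite cond_U1.
  by case: (f u == f v); rewrite ?andbT ?andbF.
rewrite H1; apply/eqP; congr (_ + _); rewrite -H1.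
rewrite (reindex_inj (inv_inj flK)) /=.
rewrite [LHS]big_mkcond [RHS]big_mkcond /=; apply: eq_bigr => f _.
by rewrite Hfl flc; case: (f u == f v).
Qed.

End Comp.

Section Abs.
Variable V : finType.

Lemma connect_plus (R R' : rel V) a b :
  (forall x y, R' x y -> R x y || ((a == x) && (b == y))) ->
  forall x y, connect R' x y -> connect R x y || (connect R x a && connect R b y).
Proof.
move=> HR x y /connectP [p Hp ->] {y}; elim: p x Hp => [|z p IH] x /=.
  by rewrite connect0.
case/andP => /HR /orP [Hxz | /andP [/eqP <- /eqP <-]] /IH /orP [H | /andP [H1 H2]].
- by rewrite (connect_trans (connect1 Hxz) H).
- by rewrite (connect_trans (connect1 Hxz) H1) H2 orbT.
- by rewrite H connect0 orbT.
- by rewrite H2 connect0 orbT.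
Qed.

Lemma connect_mono (R R' : rel V) : (forall x y, R x y -> R' x y) ->
  forall x y, connect R x y -> connect R' x y.
Proof. by move=> H; apply: connect_sub => x y /H; apply: connect1. Qed.

Lemma abs_step (I : finType) (Sp : pred I) (hd tl : I -> V) (R Rp Rm Rc : rel V) u v :
  (forall a, Sp a -> R (tl a) (hd a)) ->
  (forall x y, Rp x y = R x y || ((u == x) && (v == y))) ->
  (forall x y, Rm x y = R x y || ((v == x) && (u == y))) ->
  (forall x y, Rc x y = [|| R x y, ((u == x) && (v == y)) | ((v == x) && (u == y))]) ->
  ([forall a in Sp, connect R (hd a) (tl a)] -> connect R u v && connect R v u) ->
  (([forall a in Sp, connect Rp (hd a) (tl a)] && connect Rp v u) : nat) +
  ([forall a in Sp, connect Rm (hd a) (tl a)] && connect Rm u v) =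
  ([forall a in Sp, connect R (hd a) (tl a)] : nat) +
  [forall a in Sp, connect Rc (hd a) (tl a)].
Proof.
move=> Harc Hp Hm Hc HPQ.
set A0 := [forall a in Sp, connect R _ _]; set Ap := [forall a in Sp, connect Rp _ _].
set Am := [forall a in Sp, connect Rm _ _]; set Ac := [forall a in Sp, connect Rc _ _].
have RRp x y : R x y -> Rp x y by rewrite Hp => ->.
have RRm x y : R x y -> Rm x y by rewrite Hm => ->.
have RpRc x y : Rp x y -> Rc x y by rewrite Hp Hc => /orP [] ->; rewrite ?orbT.
have RmRc x y : Rm x y -> Rc x y by rewrite Hm Hc => /orP [] ->; rewrite ?orbT.
have mono (R1 R2 : rel V) : (forall x y, R1 x y -> R2 x y) ->
    [forall a in Sp, connect R1 (hd a) (tl a)] -> [forall a in Sp, connect R2 (hd a) (tl a)].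
  move=> H12 /forall_inP H; apply/forall_inP => a Ha; exact: connect_mono H12 _ _ (H a Ha).
have monoc (R1 R2 : rel V) : (forall x y, R1 x y -> connect R2 x y) ->
    [forall a in Sp, connect R1 (hd a) (tl a)] -> [forall a in Sp, connect R2 (hd a) (tl a)].
  move=> H12 /forall_inP H; apply/forall_inP => a Ha; exact: connect_sub H12 _ _ (H a Ha).
have I0p : A0 ==> Ap by apply/implyP; apply: mono.
have I0m : A0 ==> Am by apply/implyP; apply: mono.
have Ipc : Ap ==> Ac by apply/implyP; apply: mono.
have Imc : Am ==> Ac by apply/implyP; apply: mono.
have IPQ : A0 ==> (connect R u v && connect R v u) by apply/implyP.
have Hp' x y : Rp x y -> R x y || ((u == x) && (v == y)) by rewrite Hp.
have Hm' x y : Rm x y -> R x y || ((v == x) && (u == y)) by rewrite Hm.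
have Hc' x y : Rc x y -> Rp x y || ((v == x) && (u == y)) by rewrite Hc Hp orbA.
have EP : connect Rp v u = connect R v u.
  apply/idP/idP; last exact: connect_mono.
  by case/(connect_plus Hp')/orP => // /andP [].
have EQ : connect Rm u v = connect R u v.
  apply/idP/idP; last exact: connect_mono.
  by case/(connect_plus Hm')/orP => // /andP [].
have IcP : connect R v u ==> (Ac ==> Ap).
  apply/implyP => HP; apply/implyP; apply: monoc => x y; rewrite Hc.
  case/or3P => [H | /andP [/eqP <- /eqP <-] | /andP [/eqP <- /eqP <-]].
  - by apply: connect1; rewrite Hp H.
  - by apply: connect1; rewrite Hp !eqxx orbT.
  - by apply: connect_mono HP => ? ?; rewrite Hp => ->.
have IcQ : connect R u v ==> (Ac ==> Am).
  apply/implyP => HQ; apply/implyP; apply: monoc => x y; rewrite Hc.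
  case/or3P => [H | /andP [/eqP <- /eqP <-] | /andP [/eqP <- /eqP <-]].
  - by apply: connect1; rewrite Hm H.
  - by apply: connect_mono HQ => ? ?; rewrite Hm => ->.
  - by apply: connect1; rewrite Hm !eqxx orbT.
have IcPQ : connect R v u ==> (connect R u v ==> (Ac ==> A0)).
  apply/implyP => HP; apply/implyP => HQ; apply/implyP; apply: monoc => x y; rewrite Hc.
  case/or3P => [H | /andP [/eqP <- /eqP <-] | /andP [/eqP <- /eqP <-]] //.
  exact: connect1.
have IcN : connect R v u || connect R u v || (Ac ==> A0).
  case: (boolP (connect R v u)) => //= nP; case: (boolP (connect R u v)) => //= nQ.
  apply/implyP => /forall_inP H; apply/forall_inP => a Ha.
  have Hyx := connect1 (Harc a Ha).
  have ct := @connect_trans _ R.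
  case/orP: (connect_plus Hc' (H a Ha)) => [|/andP [H1 H2]].
    case/(connect_plus Hp')/orP => // /andP [H1 H2].
    by case/negP: nP; apply: ct (ct _ _ _ H2 Hyx) H1.
  case/(connect_plus Hp')/orP: H1 => [H1 | /andP [H1 _]];
    case/(connect_plus Hp')/orP: H2 => [H2 | /andP [_ H2]].
  - by case/negP: nQ; apply: ct (ct _ _ _ H2 Hyx) H1.
  - exact: ct H1 H2.
  - exact: ct H1 H2.
  - by case/negP: nP; apply: ct (ct _ _ _ H2 Hyx) H1.
move: I0p I0m Ipc Imc IPQ IcP IcQ IcPQ IcN; rewrite EP EQ.
by case: A0; case: Ap; case: Am; case: Ac; case: (connect R u v); case: (connect R v u).
Qed.
End Abs.

Local Open Scope ring_scope.

Section Main.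
Variables (V E : finType) (ends : E -> V * V).
Implicit Types (S C : {set E}) (o : {ffun E -> bool}) (e a : E) (x y : V).

Definition stp (S C : {set E}) (o : {ffun E -> bool}) : rel V := fun x y =>
  [exists a, ((a \in S) && (otail ends o a == x) && (Defs.ohead ends o a == y)) ||
             ((a \in C) && ((ends a == (x, y)) || (ends a == (y, x))))].
Definition TC (S C : {set E}) (o : {ffun E -> bool}) :=
  [forall a in S, connect (stp S C o) (Defs.ohead ends o a) (otail ends o a)].
Definition tsum (S C : {set E}) : nat :=
  (\sum_(o : {ffun E -> bool}) ([forall a, (a \notin S) ==> o a] && TC S C o : nat))%N.
Definition fsum (S C : {set E}) : int :=
  \sum_(A : {set E} | A \subset S) (-1) ^+ (ncomp ends (A :|: C) + ncomp ends (S :|: C)).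
Definition fl (e : E) (o : {ffun E -> bool}) : {ffun E -> bool} :=
  [ffun a => if a == e then ~~ o a else o a].

Lemma sub_split (G : {set E} -> int) (S : {set E}) e : e \in S ->
  \sum_(A : {set E} | A \subset S) G A = \sum_(A : {set E} | A \subset S :\ e) (G A + G (e |: A)).
Proof.
move=> eS; rewrite big_split /= [LHS](bigID (fun A : {set E} => e \in A)) /= addrC.
congr (_ + _).
  by apply: eq_bigl => A; rewrite subsetD1.
rewrite (reindex_onto (fun B => e |: B) (fun A => A :\ e)) /=; last first.
  by move=> A /andP [_ eA]; rewrite setD1K.
apply: eq_bigl => B; rewrite subsetD1 subUset sub1set eS setU11 /= andbT.
case: (boolP (e \in B)) => eB /=.
  rewrite andbF; apply/negbTE/negP => /andP [_ /eqP /setP /(_ e)].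
  by rewrite !inE eqxx eB.
by rewrite setU1K // eqxx andbT.
Qed.


Lemma stp_split S C o e x y : e \in S ->
  stp S C o x y = stp (S :\ e) C o x y ||
                  ((otail ends o e == x) && (Defs.ohead ends o e == y)).
Proof.
move=> eS; rewrite /stp; apply/existsP/orP => [[a] | [/existsP [a] | H]].
- case/orP => [/andP [/andP [aS Hx] Hy] | HC].
    case: (eqVneq a e) => [Hae | Hae]; first by right; rewrite -Hae Hx Hy.
    by left; apply/existsP; exists a; rewrite in_setD1 Hae aS Hx Hy.
  by left; apply/existsP; exists a; rewrite HC orbT.
- case/orP => [/andP [/andP [aS Hx] Hy] | HC]; exists a; last by rewrite HC orbT.
  by move: aS; rewrite in_setD1 => /andP [_ ->]; rewrite Hx Hy.
- by exists e; rewrite eS H.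
Qed.

Lemma stp_C1 S C o e x y :
  stp S (e |: C) o x y = stp S C o x y || ((ends e == (x, y)) || (ends e == (y, x))).
Proof.
rewrite /stp; apply/existsP/orP => [[a] | [/existsP [a] | H]].
- case/orP => [H | /andP [aC H]]; first by left; apply/existsP; exists a; rewrite H.
  move: aC; rewrite in_setU1 => /orP [/eqP Hae | aC]; first by right; rewrite -Hae.
  by left; apply/existsP; exists a; rewrite aC H orbT.
- case/orP => [H | /andP [aC H]]; exists a; first by rewrite H.
  by rewrite in_setU1 aC orbT H orbT.
- by exists e; rewrite setU11 H orbT.
Qed.

Lemma stp_ext S C o1 o2 : {in S, o1 =1 o2} -> stp S C o1 =2 stp S C o2.
Proof.
move=> H x y; apply: eq_existsb => a; case: (boolP (a \in S)) => aS //=.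
by rewrite /otail /Defs.ohead H.
Qed.

Lemma stp_adj S C o x y : stp S C o x y -> adjA ends (S :|: C) x y.
Proof.
case/existsP => a /orP [/andP [/andP [aS]] | /andP [aC H]].
  rewrite /otail /Defs.ohead => Hx Hy; apply/existsP; exists a; rewrite in_setU aS /=.
  move: Hx Hy; case: (o a) => /eqP <- /eqP <-; rewrite -surjective_pairing eqxx //.
  by rewrite orbT.
by apply/existsP; exists a; rewrite in_setU aC orbT H.
Qed.

Lemma adjC_stp S C o x y : adjA ends C x y -> stp S C o x y.
Proof. by case/existsP => a /andP [aC H]; apply/existsP; exists a; rewrite aC H orbT. Qed.

Lemma fl_ne e o a : a != e -> fl e o a = o a.
Proof. by rewrite /fl ffunE => /negbTE ->. Qed.

Lemma fl_e e o : fl e o e = ~~ o e.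
Proof. by rewrite /fl ffunE eqxx. Qed.

Lemma flK e : involutive (fl e).
Proof. by move=> o; apply/ffunP => a; rewrite !ffunE; case: (a == e); rewrite ?negbK. Qed.

Lemma TC_split S C o e : e \in S ->
  TC S C o = [forall a in S :\ e, connect (stp S C o) (Defs.ohead ends o a) (otail ends o a)]
             && connect (stp S C o) (Defs.ohead ends o e) (otail ends o e).
Proof.
move=> eS; apply/forall_inP/andP => [H | [/forall_inP H1 H2] a aS].
  split; last exact: H.
  by apply/forall_inP => a; rewrite in_setD1 => /andP [_]; apply: H.
case: (eqVneq a e) => [-> // | Hae]; apply: H1; by rewrite in_setD1 Hae.
Qed.

Lemma TC_ext S C o1 o2 : {in S, o1 =1 o2} -> TC S C o1 = TC S C o2.
Proof.
move=> H; apply: eq_forallb_in => a aS.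
rewrite (eq_connect (stp_ext C H)) /otail /Defs.ohead H //.
Qed.

Lemma tsum_split S C e : e \in S ->
  tsum S C = (\sum_(o : {ffun E -> bool})
     ([forall a, (a \notin S :\ e) ==> o a] * ((TC S C o : nat) + TC S C (fl e o))))%N.
Proof.
move=> eS; rewrite /tsum (bigID (fun o : {ffun E -> bool} => o e)) /=.
rewrite [X in (_ + X)%N](reindex_inj (inv_inj (flK e))) /=.
rewrite [X in (_ + X)%N](eq_bigl (fun o : {ffun E -> bool} => o e)); last first.
  by move=> o; rewrite fl_e negbK.
rewrite -big_split /= [RHS](bigID (fun o : {ffun E -> bool} => o e)) /=.
rewrite [X in (_ + X)%N]big1 ?addn0; last first.
  move=> o /negbTE oe; have -> : [forall a, (a \notin S :\ e) ==> o a] = false.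
    by apply/negbTE/negP => /forallP /(_ e); rewrite in_setD1 eqxx /= oe.
  by [].
apply: eq_bigr => o oe.
have E1 : [forall a, (a \notin S) ==> o a] = [forall a, (a \notin S :\ e) ==> o a].
  apply: eq_forallb => a; rewrite in_setD1 negb_and negbK.
  by case: (eqVneq a e) => [-> | _] /=; rewrite ?oe ?eS ?implybT.
have E2 : [forall a, (a \notin S) ==> fl e o a] = [forall a, (a \notin S) ==> o a].
  apply: eq_forallb => a; case: (eqVneq a e) => [-> | Hae]; first by rewrite eS.
  by rewrite fl_ne.
by rewrite E2 E1; case: [forall a, _]; rewrite ?mul1n ?mul0n.
Qed.

End Main.

Section Main2.
Variables (V E : finType) (ends : E -> V * V).
Implicit Types (S C F : {set E}) (o : {ffun E -> bool}) (e a : E) (x y : V).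

Lemma csym F x y : connect (adjA ends F) x y = connect (adjA ends F) y x.
Proof. exact: (sym_connect_sym (adjA_sym ends F)). Qed.

Lemma adj_mono (F1 F2 : {set E}) x y : F1 \subset F2 ->
  connect (adjA ends F1) x y -> connect (adjA ends F2) x y.
Proof.
move=> /subsetP H; apply: connect_mono => a b /existsP [f /andP [fF Hf]].
by apply/existsP; exists f; rewrite Hf (H _ fF).
Qed.

Lemma TC_loop S C o e : e \in S -> connect (adjA ends C) (ends e).1 (ends e).2 ->
  TC ends S C o = TC ends (S :\ e) C o.
Proof.
move=> eS Hl.
have Huv x y : connect (adjA ends C) x y -> connect (stp ends (S :\ e) C o) x y.
  by apply: connect_mono => ? ?; apply: adjC_stp.
have Hc x y : connect (stp ends S C o) x y = connect (stp ends (S :\ e) C o) x y.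
  apply/idP/idP; last by apply: connect_mono => ? ?; rewrite (stp_split _ _ _ _ _ eS) => ->.
  apply: connect_sub => a b; rewrite (stp_split _ _ _ _ _ eS) => /orP [H | ].
    exact: connect1.
  rewrite /otail /Defs.ohead; case: (o e) => /andP [/eqP <- /eqP <-]; apply: Huv => //.
  by rewrite csym.
rewrite (TC_split _ _ _ eS) Hc.
have -> : connect (stp ends (S :\ e) C o) (Defs.ohead ends o e) (otail ends o e).
  by apply: Huv; rewrite /otail /Defs.ohead; case: (o e); rewrite // csym.
by rewrite andbT; apply: eq_forallb_in => a _; rewrite Hc.
Qed.

Lemma TC_bridge S C o e : e \in S ->
  ~~ connect (adjA ends (S :\ e :|: C)) (ends e).1 (ends e).2 -> TC ends S C o = false.
Proof.
move=> eS Hb; apply/negbTE/negP; rewrite (TC_split _ _ _ eS) => /andP [_ H].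
have H' : forall x y, stp ends S C o x y -> stp ends (S :\ e) C o x y ||
   ((otail ends o e == x) && (Defs.ohead ends o e == y)).
  by move=> x y; rewrite (stp_split _ _ _ _ _ eS).
have := connect_plus H' H; rewrite orb_andr orbb => /andP [H2 _].
have H3 := connect_mono (@stp_adj _ _ ends _ _ o) H2.
case/negP: Hb; move: H3; rewrite /otail /Defs.ohead; case: (o e) => //.
by rewrite csym.
Qed.

Lemma TC_ord S C o e : e \in S -> o e ->
  connect (adjA ends (S :\ e :|: C)) (ends e).1 (ends e).2 ->
  ((TC ends S C o : nat) + TC ends S C (fl e o) =
   (TC ends (S :\ e) C o : nat) + TC ends (S :\ e) (e |: C) o)%N.
Proof.
move=> eS oe Hconn.
set u := (ends e).1; set v := (ends e).2.
have Hte : otail ends o e = u by rewrite /otail oe.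
have Hhe : Defs.ohead ends o e = v by rewrite /Defs.ohead oe.
have Htf : otail ends (fl e o) e = v by rewrite /otail fl_e oe.
have Hhf : Defs.ohead ends (fl e o) e = u by rewrite /Defs.ohead fl_e oe.
have agree : {in S :\ e, fl e o =1 o}.
  by move=> a; rewrite in_setD1 => /andP [Hae _]; apply: fl_ne.
rewrite (TC_split _ _ _ eS) (TC_split _ _ (fl e o) eS) Hte Hhe Htf Hhf.
have -> : [forall a in S :\ e, connect (stp ends S C (fl e o))
             (Defs.ohead ends (fl e o) a) (otail ends (fl e o) a)] =
          [forall a in S :\ e, connect (stp ends S C (fl e o))
             (Defs.ohead ends o a) (otail ends o a)].
  by apply: eq_forallb_in => a Ha; rewrite /Defs.ohead /otail agree.
set R := stp ends (S :\ e) C o.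
apply: (@abs_step _ _ (fun a => a \in S :\ e) (Defs.ohead ends o) (otail ends o) R
  (stp ends S C o) (stp ends S C (fl e o)) (stp ends (S :\ e) (e |: C) o) u v).
- by move=> a Ha; apply/existsP; exists a; rewrite Ha !eqxx.
- by move=> x y; rewrite (stp_split _ _ _ _ _ eS) Hte Hhe.
- move=> x y; rewrite (stp_split _ _ _ _ _ eS) Htf Hhf.
  by rewrite (stp_ext ends C agree).
- have Euv : ends e = (u, v) by rewrite /u /v -surjective_pairing.
  by move=> x y; rewrite stp_C1 Euv !xpair_eqE [(u == y) && _]andbC.
- move=> /forall_inP T0.
  have Hadj : forall x y, adjA ends (S :\ e :|: C) x y -> connect R x y.
    move=> x y /existsP [a /andP [aSC Ha]]; move: aSC; rewrite in_setU => /orP [aS | aC].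
      case/orP: Ha => /eqP He; move: (T0 a aS); rewrite /R /otail /Defs.ohead He /=;
        case Hoa: (o a) => //= _; apply: connect1; apply/existsP; exists a;
        by rewrite aS /otail /Defs.ohead He Hoa !eqxx.
    apply: connect1; apply/existsP; exists a; by rewrite aC Ha orbT.
  have Hsub := connect_sub Hadj.
  by rewrite !Hsub // csym.
Qed.
End Main2.

Section Main3.
Variables (V E : finType) (ends : E -> V * V).
Implicit Types (S C F : {set E}) (o : {ffun E -> bool}) (e a : E) (x y : V).

Lemma main_ind n : forall S C, #|S| = n -> fsum ends S C = (tsum ends S C)%:Z.
Proof.
elim: n => [|n IH] S C HS.
  move/eqP: HS; rewrite cards_eq0 => /eqP ->.
  rewrite /fsum (big_pred1 set0); last by move=> A; rewrite subset0.
  pose ot : {ffun E -> bool} := [ffun=> true].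
  rewrite addnn -mul2n mulnC exprM sqrr_sign /tsum (bigD1 ot) //= big1 ?addn0.
    have -> : TC ends set0 C ot by apply/forall_inP => a; rewrite inE.
    have -> : [forall a, (a \notin set0) ==> ot a] by apply/forallP => a; rewrite ffunE implybT.
    by [].
  move=> o Ho; apply/eqP; rewrite eqb0 negb_and; apply/orP; left.
  apply/negP => /forallP H; case/eqP: Ho; rewrite /ot; apply/ffunP => a; rewrite ffunE.
  by have := H a; rewrite inE.
have /set0Pn [e eS] : S != set0 by rewrite -card_gt0 HS.
have HS' : #|S :\ e| = n by move: HS; rewrite (cardsD1 e) eS add1n => -[].
set S' := S :\ e.
have agree o : {in S', fl e o =1 o}.
  by move=> a; rewrite in_setD1 => /andP [Hae _]; apply: fl_ne.
have SC : S :|: C = e |: (S' :|: C) by rewrite setUA setD1K.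
case: (boolP (connect (adjA ends C) (ends e).1 (ends e).2)) => Hl.
  have -> : fsum ends S C = fsum ends S' C + fsum ends S' C.
    rewrite /fsum (sub_split _ eS) -big_split; apply: eq_bigr => A HA.
    have E1 : ncomp ends (S :|: C) = ncomp ends (S' :|: C).
      by rewrite SC ncomp_conn //; apply: adj_mono Hl; apply: subsetUr.
    have E2 : ncomp ends ((e |: A) :|: C) = ncomp ends (A :|: C).
      by rewrite -setUA ncomp_conn //; apply: adj_mono Hl; apply: subsetUr.
    by rewrite E1 E2.
  have -> : tsum ends S C = (tsum ends S' C + tsum ends S' C)%N.
    rewrite (tsum_split _ _ eS) /tsum -big_split; apply: eq_bigr => o _.
    rewrite (TC_loop o eS Hl) (TC_loop (fl e o) eS Hl) (TC_ext _ _ (agree o)).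
    by rewrite -!mulnb mulnDr.
  by rewrite PoszD !IH.
case: (boolP (connect (adjA ends (S' :|: C)) (ends e).1 (ends e).2)) => Hb; last first.
  have -> : fsum ends S C = 0.
    rewrite /fsum (sub_split _ eS) big1 // => A HA.
    have Hn : ~~ connect (adjA ends (A :|: C)) (ends e).1 (ends e).2.
      by apply: contra Hb; apply: adj_mono; apply: setSU.
    by rewrite -setUA (ncomp_bridge Hn) addSn exprS mulN1r addNr.
  have -> : tsum ends S C = 0%N.
    rewrite (tsum_split _ _ eS) big1 // => o _.
    by rewrite !(TC_bridge _ eS Hb) muln0.
  by [].
have -> : fsum ends S C = fsum ends S' C + fsum ends S' (e |: C).
  rewrite /fsum (sub_split _ eS) big_split; congr (_ + _); apply: eq_bigr => A HA.
    by rewrite SC ncomp_conn.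
  congr ((-1) ^+ (ncomp ends _ + ncomp ends _)).
    by rewrite setUCA setUA.
  by rewrite setUCA setUA setD1K.
have -> : tsum ends S C = (tsum ends S' C + tsum ends S' (e |: C))%N.
  rewrite (tsum_split _ _ eS) /tsum -big_split; apply: eq_bigr => o _.
  case: (boolP [forall a, (a \notin S') ==> o a]) => Ho //=.
  have oe : o e by move/forallP: Ho => /(_ e); rewrite /S' in_setD1 eqxx.
  by rewrite mul1n TC_ord.
by rewrite PoszD !IH.
Qed.

End Main3.

Local Close Scope ring_scope.

Section Cyc.
Variables (V E : finType) (ends : E -> V * V) (o : {ffun E -> bool}).
Implicit Types (e a : E) (x y : V).

Local Notation hd := (Defs.ohead ends o).
Local Notation tl := (otail ends o).
Local Notation arel := (fun a b : E => hd a == tl b).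
Definition vst : rel V := fun x y => [exists a, (tl a == x) && (hd a == y)].

Lemma stpT x y : stp ends setT set0 o x y = vst x y.
Proof. by apply: eq_existsb => a; rewrite in_setT in_set0 /= orbF. Qed.

Lemma arcs_connect q a : path arel a q -> connect vst (hd a) (hd (last a q)).
Proof.
elim: q a => [|b q IH] a /=; first by rewrite connect0.
case/andP => /eqP Hab /IH; apply: connect_trans; apply: connect1.
by apply/existsP; exists b; rewrite Hab !eqxx.
Qed.

Lemma build p x a : path vst x p -> hd a = x ->
  exists q, [/\ path arel a q, hd (last a q) = last x p & map tl q = belast x p].
Proof.
elim: p x a => [|y p IH] x a /=; first by move=> _ Ha; exists [::]; rewrite /= Ha.
case/andP => /existsP [b /andP [/eqP Hb1 /eqP Hb2]] Hp Ha.
have [q [H1 H2 H3]] := IH y b Hp Hb2.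
by exists (b :: q); rewrite /= H1 H2 H3 Hb1 Ha eqxx.
Qed.

Lemma arc_cycleE e : arc_in_dir_cycle ends o e = connect vst (hd e) (tl e).
Proof.
apply/idP/idP.
  case/existsP => n /existsP [t /andP [He /and3P [_ _ Hc]]].
  case: (rot_to He) => i s' Hrot.
  move: Hc; rewrite -(rot_cycle i) Hrot /= rcons_path => /andP [Hp /eqP Hl].
  by have := arcs_connect Hp; rewrite Hl.
case/connectP => p0 Hp0 Hlast.
move: Hlast; case: (shortenP Hp0) => p Hp Hu _ Hlast.
have [q [H1 H2 H3]] := build Hp (erefl (hd e)).
set s := e :: q.
have Hus : uniq (map tl s).
  rewrite /= H3 Hlast; move: Hu; rewrite lastI rcons_uniq.
  by [].
have Hsz : size s < #|E|.+1.
  rewrite ltnS -(card_uniqP (map_uniq Hus)); exact: max_card.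
apply/existsP; exists (Ordinal Hsz); apply/existsP; exists (in_tuple s).
rewrite (_ : val (in_tuple s) = s) //; apply/andP; split; first exact: mem_head.
apply/and3P; split => //.
by rewrite /s /= rcons_path H1 /= H2 Hlast.
Qed.

End Cyc.

Local Open Scope ring_scope.

Lemma card_img3 (T L : finType) (phi : T -> L) a b c :
  (1 < #|phi @: [set a; b; c]|)%N = ~~ ((phi a == phi c) && (phi b == phi c)).
Proof.
apply/card_gt1P/negP => [[x [y [Hx Hy Hxy]]] /andP [/eqP Ha /eqP Hb] | H].
  have Hall w : w \in phi @: [set a; b; c] -> w = phi c.
    by case/imsetP => t Ht ->; move: Ht; rewrite !inE => /orP [/orP [] | ] /eqP ->.
  by move: Hxy; rewrite (Hall _ Hx) (Hall _ Hy) eqxx.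
case: (eqVneq (phi a) (phi c)) => Hac.
  case: (eqVneq (phi b) (phi c)) => Hbc; first by case: H; rewrite Hac Hbc eqxx.
  exists (phi b), (phi c); split => //; apply: imset_f; by rewrite !inE eqxx ?orbT.
exists (phi a), (phi c); split => //; apply: imset_f; by rewrite !inE eqxx ?orbT.
Qed.

Lemma prod_bool (I : finType) (P : pred I) : ([forall i, P i] : nat) = (\prod_i (P i : nat))%N.
Proof.
case: (boolP [forall i, P i]) => [/forallP H | ].
  by rewrite big1 // => i _; rewrite H.
by rewrite negb_forall => /existsP [i Hi]; rewrite (bigD1 i) //= (negbTE Hi).
Qed.

Lemma sum_nc (lam : nat) (a b : 'I_lam) :
  (\sum_(c : 'I_lam) (~~ ((a == c) && (b == c)) : nat))%N = (lam - (a == b))%N.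
Proof.
case: (eqVneq a b) => [<- | Hab].
  rewrite subn1 -[X in X.-1](card_ord lam) -(cardC1 a) -sum1_card [RHS]big_mkcond /=; apply: eq_bigr => c _.
  by rewrite inE andbb eq_sym; case: (c != a).
rewrite subn0 -[X in _ = X](card_ord lam) -sum1_card; apply: eq_bigr => c _.
by case: (eqVneq a c) => [Hac | //]; case: (eqVneq b c) => [Hbc | //]; case/eqP: Hab; rewrite Hac Hbc.
Qed.

Section Count.
Variables (V E : finType) (ends : E -> V * V).

Lemma count_nat lam : num_weak_col (HG_edge ends) lam =
  (\sum_(f : {ffun V -> 'I_lam}) \prod_(e : E) (lam - (f (ends e).1 == f (ends e).2)))%N.
Proof.
rewrite /num_weak_col (card_sumb (fun phi : {ffun (V + E)%type -> 'I_lam} => weak_proper (HG_edge ends) phi)).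
pose join (fg : {ffun V -> 'I_lam} * {ffun E -> 'I_lam}) : {ffun (V + E)%type -> 'I_lam} :=
  [ffun w => match w with inl x => fg.1 x | inr e => fg.2 e end].
pose unjoin (phi : {ffun (V + E)%type -> 'I_lam}) :=
  ([ffun x => phi (inl x)], [ffun e => phi (inr e)]).
have uK : cancel join unjoin.
  by case=> f g; rewrite /unjoin /join; congr (_, _); apply/ffunP => x; rewrite !ffunE.
have jK : cancel unjoin join.
  by move=> phi; apply/ffunP => -[x | e]; rewrite !ffunE.
rewrite (reindex join); last by apply: onW_bij; exists unjoin.
rewrite -(pair_bigA _ (fun f g => (weak_proper (HG_edge ends) (join (f, g)) : nat))) /=.
apply: eq_bigr => f _.
have Hw g : weak_proper (HG_edge ends) (join (f, g)) =
   [forall e, ~~ ((f (ends e).1 == g e) && (f (ends e).2 == g e))].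
  apply: eq_forallb => e; rewrite /HG_edge card_img3 /join !ffunE.
  by [].
under eq_bigr => g _ do rewrite Hw prod_bool.
rewrite -(bigA_distr_bigA (fun e c => (~~ ((f (ends e).1 == c) && (f (ends e).2 == c)) : nat))).
by apply: eq_bigr => e _; rewrite sum_nc.
Qed.

Lemma PoszX (m n : nat) : ((m ^ n)%N)%:Z = m%:Z ^+ n.
Proof. by rewrite -!natz natrX. Qed.

Lemma count_int lam : (0 < lam)%N ->
  (num_weak_col (HG_edge ends) lam)%:Z =
  \sum_(A : {set E}) (-1) ^+ #|A| * lam%:Z ^+ (#|E| - #|A| + ncomp ends A).
Proof.
move=> lam0; rewrite count_nat (big_morph Posz PoszD (erefl _)).
under eq_bigr => f _.
  rewrite (big_morph Posz PoszM (erefl _)).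
  under eq_bigr => e _ do rewrite -subzn ?(leq_trans (leq_b1 _) lam0) // addrC.
  rewrite bigA_distr.
  over.
rewrite /= exchange_big /=; apply: eq_bigr => A _.
have Hf (f : {ffun V -> 'I_lam}) :
    \prod_(e : E) (if e \in A then - (f (ends e).1 == f (ends e).2)%:Z else lam%:Z) =
    (-1) ^+ #|A| * lam%:Z ^+ (#|E| - #|A|) * (cond ends A f)%:Z.
  rewrite (bigID (fun e => e \in A)) /=.
  rewrite (eq_bigr (fun e => - (f (ends e).1 == f (ends e).2)%:Z)); last by move=> e ->.
  rewrite [X in _ * X](eq_bigr (fun e => lam%:Z)); last by move=> e /negbTE ->.
  rewrite prodrN [X in _ * X](eq_bigl (mem (~: A))); last by move=> e; rewrite !inE.
  rewrite prodr_const -(cardsC A) addKn mulrAC; congr (_ * _).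
  case: (boolP (cond ends A f)) => [/forall_inP H | ].
    by rewrite big1 // => e eA; rewrite H.
  rewrite negb_forall_in => /existsP [e /andP [eA He]].
  by rewrite (bigD1 e) //= (negbTE He) mul0r.
rewrite (eq_bigr _ (fun f _ => Hf f)) -mulr_sumr.
rewrite -(big_morph Posz PoszD (erefl _)) -card_sumb count_cond card_ord PoszX.
by rewrite -mulrA -exprD.
Qed.
End Count.

Lemma sign_mod (n k : nat) : (-1 : int) ^+ (n + k * 2) = (-1) ^+ n.
Proof. by rewrite exprD exprM sqrr_sign mulr1. Qed.

Section Fin.
Variables (V E : finType) (ends : E -> V * V).

Lemma tutte_fsum : tutte ends (0 : int) 2 = fsum ends setT set0.
Proof.
rewrite /tutte /fsum [RHS](eq_bigl (fun _ => true)); last by move=> A; rewrite subsetT.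
apply: eq_bigr => A _; rewrite !setU0 sub0r (_ : (2 - 1 : int) = 1) // expr1n mulr1.
have h1 := ncomp_le_V ends A; have h2 := ncomp_mono ends (subsetT A).
rewrite /rk.
have -> : ((#|V| - ncomp ends setT) - (#|V| - ncomp ends A) = ncomp ends A - ncomp ends setT)%N by lia.
have -> : (ncomp ends A + ncomp ends setT = (ncomp ends A - ncomp ends setT) + ncomp ends setT * 2)%N by lia.
by rewrite sign_mod.
Qed.

Lemma tsum_tco : tsum ends setT set0 = num_tco ends.
Proof.
rewrite /num_tco (card_sumb (fun o : {ffun E -> bool} => totally_cyclic ends o)) /tsum.
apply: eq_bigr => o _.
have -> : [forall a, (a \notin setT) ==> o a] by apply/forallP => a; rewrite in_setT.
congr (nat_of_bool _); apply: eq_forallb => a; rewrite in_setT /= arc_cycleE.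
by rewrite (eq_connect (@stpT _ _ ends o)).
Qed.

End Fin.

Unset Implicit Arguments.
Theorem corollary2 (V E : finType) (ends : E -> V * V) :
  exists p : {poly int},
    (forall lam : nat, (0 < lam)%N ->
       p.[lam%:Z] = (num_weak_col (HG_edge ends) lam)%:Z) /\
    `|p.[-1]| = tutte ends (0 : int) 2 /\
    tutte ends (0 : int) 2 = (num_tco ends)%:Z.
Proof.
pose p : {poly int} :=
  \sum_(A : {set E}) ((-1) ^+ #|A|)%:P * 'X^(#|E| - #|A| + ncomp ends A).
have Ht : tutte ends (0 : int) 2 = (num_tco ends)%:Z.
  by rewrite tutte_fsum (@main_ind _ _ ends _ setT set0 erefl) tsum_tco.
exists p; split; last split => //.
  move=> lam lam0; rewrite count_int // /p horner_sum.
  by apply: eq_bigr => A _; rewrite hornerCM hornerXn.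
have -> : p.[-1] = (-1) ^+ (#|E| + ncomp ends setT) * fsum ends setT set0.
  rewrite /p horner_sum /fsum mulr_sumr [LHS](eq_bigl (fun A : {set E} => A \subset setT)); last first.
    by move=> A; rewrite subsetT.
  apply: eq_bigr => A _; rewrite hornerCM hornerXn !setU0 -!exprD.
  have hA : (#|A| <= #|E|)%N by apply: max_card.
  have -> : (#|A| + (#|E| - #|A| + ncomp ends A) = #|E| + ncomp ends A)%N by lia.
  have -> : (#|E| + ncomp ends setT + (ncomp ends A + ncomp ends setT) =
             (#|E| + ncomp ends A) + ncomp ends setT * 2)%N by lia.
  by rewrite sign_mod.
rewrite normrM normrX normrN1 expr1n mul1r -tutte_fsum Ht.
by apply: ger0_norm.
Qed.
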